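(* Let $\widehat{\mathscr{O}}$ be a commutative local principal ideal ring, complete with respect to its unique maximal ideal $\mathfrak{m}=(\pi)$, with residue field $k$ of characteristic other than $2$. Let $A\in\mathrm{M}_n(\widehat{\mathscr{O}})$ be cyclic, and let $F\in\widehat{\mathscr{O}}[x_1,\dots,x_m]$ (commuting variables) be a monic polynomial of degree $d$, with reduction $\overline{F}\in k[x_1,\dots,x_m]$. Suppose there is $\widetilde{\mathbf B}=(\widetilde{B}_1,\dots,\widetilde{B}_m)\in\mathrm{M}_n(k)^m$ with $\widetilde B_i\widetilde B_j=\widetilde B_j\widetilde B_i$ for all $i,j$, such that $\overline{F}(\widetilde{\mathbf B})=\overline{A}$, and suppose that for some $1\le r\le m$ one has $\frac{\partial \overline F}{\partial x_i}\big|_{\widetilde{\mathbf B}}\in\mathrm{GL}_n(k)$ for $i=1,\dots,r$ and $\frac{\partial \overline F}{\partial x_i}\big|_{\widetilde{\mathbf B}}=0\in\mathrm{M}_n(k)$ for $i=r+1,\dots,m$. Then there exists a tuple $\mathbf B=(B_1,\dots,B_m)\in\mathrm{M}_n(\widehat{\mathscr{O}})^m$ of pairwise commuting matrices such that $\overline{B_i}=\widetilde B_i$ for each $i=1,\dots,m$ and $F(\mathbf B)=A$.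
   Context: Bars denote reduction modulo $\mathfrak m$ (entrywise for matrices, coefficientwise for polynomials). $A\in\mathrm{M}_n(\widehat{\mathscr O})$ is called cyclic if $\overline{A}\in\mathrm{M}_n(k)$ is cyclic, i.e. $k^n$ is a cyclic $k[t]$-module via $\overline A$. Completeness means $\widehat{\mathscr O}\to\varprojlim_j\widehat{\mathscr O}/\mathfrak m^j$ is an isomorphism. Evaluation of a polynomial in commuting variables at a tuple of pairwise commuting matrices is by substitution. *)

(* Defs.v *)
From HB Require Import structures.
From mathcomp Require Import all_boot all_order all_algebra.
From mathcomp Require Import mpoly.
Set Implicit Arguments. Unset Strict Implicit. Unset Printing Implicit Defensive.
Import Order.TTheory GRing.Theory.
Local Open Scope ring_scope.

Section Ideals.
Variable R : comNzRingType.

Definition is_ideal (I : R -> Prop) : Prop :=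
  I 0 /\ (forall x y, I x -> I y -> I (x + y)) /\ (forall a x, I x -> I (a * x)).

Definition proper_ideal (I : R -> Prop) : Prop := is_ideal I /\ ~ I 1.

Definition maximal_ideal (I : R -> Prop) : Prop :=
  proper_ideal I /\
  forall J, proper_ideal J -> (forall x, I x -> J x) -> forall x, J x -> I x.

Definition gen_ideal (a : R) : R -> Prop := fun x => exists c, x = c * a.

Definition principal_ideal_ring : Prop :=
  forall I, is_ideal I -> exists a, forall x, I x <-> gen_ideal a x.

Definition local_ring_with_max (m : R -> Prop) : Prop :=
  maximal_ideal m /\ forall J, maximal_ideal J -> forall x, J x <-> m x.

(* completeness w.r.t. m = (pi): R -> lim_j R/(pi^j) is bijective.
   An element of the inverse limit is represented by a sequence s with
   s (j+1) = s j mod pi^j; injectivity and surjectivity are spelled out. *)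
Definition complete_wrt (pi : R) : Prop :=
  (forall x y, (forall j, gen_ideal (pi ^+ j) (x - y)) -> x = y) /\
  (forall s : nat -> R, (forall j, gen_ideal (pi ^+ j) (s j.+1 - s j)) ->
     exists x, forall j, gen_ideal (pi ^+ j) (x - s j)).

End Ideals.

Definition cyclic_mx (k : fieldType) (n : nat) (A : 'M[k]_n) : Prop :=
  exists v : 'cV[k]_n, forall w : 'cV[k]_n,
    exists p : {poly k}, w = (\sum_(i < size p) p`_i *: A ^+ i) *m v.

Definition mx_eval (R : comNzRingType) (m n : nat) (F : {mpoly R[m]})
  (B : 'I_m -> 'M[R]_n) : 'M[R]_n :=
  \sum_(mo <- msupp F) F@_mo *: \prod_(i < m) (B i) ^+ (mo i).

(* Main.v *)
Require Import Defs.
From HB Require Import structures.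
From mathcomp Require Import all_boot all_order all_algebra.
From mathcomp Require Import mpoly.
From mathcomp Require Import ring.
From Stdlib Require Import ClassicalEpsilon.
Import Order.TTheory GRing.Theory.
Local Open Scope ring_scope.



Lemma mmap_comp_rmorph (n : nat) (R S S' : nzRingType) (f : R -> S)
  (g : {rmorphism S -> S'}) (h : 'I_n -> S) (p : {mpoly R[n]}) :
  g (mmap f h p) = mmap (g \o f) (g \o h) p.
Proof.
rewrite /mmap rmorph_sum; apply: eq_bigr => mo _; rewrite rmorphM /mmap1 rmorph_prod.
by congr (_ * _); apply: eq_bigr => i _; rewrite rmorphXn.
Qed.

Lemma mmap_map (n : nat) (R R' S : nzRingType) (g : {rmorphism R -> R'})
  (f : {rmorphism R' -> S}) (h : 'I_n -> S) (p : {mpoly R[n]}) :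
  mmap f h (map_mpoly g p) = mmap (f \o g) h p.
Proof.
pose i := maxn (msize p) (msize (map_mpoly g p)).
rewrite (mmapE i) ?leq_maxr // (mmapE i) ?leq_maxl //; apply: eq_bigr => mo _.
by rewrite mcoeff_map_mpoly.
Qed.

Lemma mderiv_map (n : nat) (R S : nzRingType) (g : {rmorphism R -> S}) i
  (p : {mpoly R[n]}) : map_mpoly g (mderiv i p) = mderiv i (map_mpoly g p).
Proof.
by apply/mpolyP => mo; rewrite mcoeff_map_mpoly !mcoeff_mderiv mcoeff_map_mpoly raddfMn.
Qed.

Lemma mx_eval_horner (R : comNzRingType) n' m (A : 'M[R]_n'.+1)
  (F : {mpoly R[m]}) (h : 'I_m -> {poly R}) :
  mx_eval F (fun i => horner_mx A (h i)) = horner_mx A (mmap polyC h F).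
Proof.
rewrite /mx_eval /mmap rmorph_sum; apply: eq_bigr => mo _.
rewrite rmorphM /= horner_mx_C /mmap1 rmorph_prod -mul_scalar_mx.
by congr (_ *m _); apply: eq_bigr => i _; rewrite rmorphXn.
Qed.

Lemma binom1 (S : comNzRingType) (x y : S) a :
  exists q, (x + y) ^+ a = x ^+ a + y * (a%:R * x ^+ a.-1) + y ^+ 2 * q.
Proof.
elim: a => [|a [q IH]]; first by exists 0; rewrite !expr0 mul0r mulr0 mulr0 !addr0.
have E : x * (a%:R * x ^+ a.-1) = a%:R * x ^+ a.
  by case: a {IH} => [|a]; rewrite ?mul0r ?mulr0 // mulrCA -exprS.
exists (x * q + a%:R * x ^+ a.-1 + y * q).
rewrite exprS IH /= -[(a.+1)%:R]natr1 exprS.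
have E2 : (a%:R + 1) * x ^+ a = x * (a%:R * x ^+ a.-1) + x ^+ a by rewrite E; ring.
rewrite E2 [x ^+ a.+1]exprS; move: (x ^+ a) (x ^+ a.-1) (a%:R : S) => X Y N; ring.
Qed.

Lemma mono_taylor (m : nat) (S : comNzRingType) (h h' : 'I_m -> S) (i0 : 'I_m) (y : S) :
  h' i0 = h i0 + y -> (forall i, i != i0 -> h' i = h i) ->
  forall mo : 'X_{1..m}, exists q, mmap1 h' mo =
    mmap1 h mo + y * ((mo i0)%:R * mmap1 h (mo - U_(i0))%MM) + y ^+ 2 * q.
Proof.
move=> H0 H1 mo.
have [q Hq] := @binom1 _ (h i0) y (mo i0).
pose Pr := \prod_(i < m | i != i0) h i ^+ mo i.
exists (q * Pr).
rewrite /mmap1 (bigD1 i0) //= [X in _ = X + _ + _](bigD1 i0) //=.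
rewrite [X in _ = _ + y * (_ * X) + _](bigD1 i0) //=.
rewrite H0 Hq mnmBE mnm1E eqxx subn1.
have -> : \prod_(i < m | i != i0) h' i ^+ mo i = Pr by apply: eq_bigr => i /H1 ->.
have -> : \prod_(i < m | i != i0) h i ^+ (mo - U_(i0))%MM i = Pr.
  by apply: eq_bigr => i ne; rewrite mnmBE mnm1E eq_sym (negbTE ne) subn0.
move: (h i0 ^+ mo i0) (h i0 ^+ (mo i0).-1) ((mo i0)%:R : S) => X Y N; rewrite -/Pr; clearbody Pr; ring.
Qed.

Lemma taylor (m : nat) (R : nzRingType) (S : comNzRingType) (f : {rmorphism R -> S})
  (h h' : 'I_m -> S) i0 y :
  h' i0 = h i0 + y -> (forall i, i != i0 -> h' i = h i) ->
  forall p : {mpoly R[m]}, exists q,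
    mmap f h' p = mmap f h p + y * mmap f h (mderiv i0 p) + y ^+ 2 * q.
Proof.
move=> H0 H1; elim/mpolyind => [|c mo p _ _ [q Hq]].
  by exists 0; rewrite mderiv0 !mmap0 mulr0 mulr0 !addr0.
have [q1 Hq1] := @mono_taylor _ _ _ _ _ _ H0 H1 mo.
exists (f c * q1 + q).
rewrite mderivD mderivZ mderivX !mmapD !mmapZ !mmapX Hq Hq1 rmorph_nat.
move: (mmap1 h mo) (mmap1 h (mo - U_(i0))%MM) ((mo i0)%:R : S) => X Y N.
ring.
Qed.



Definition Ij (O : comNzRingType) (P mu : {poly O}) (j : nat) (p : {poly O}) :=
  exists s u, p = P ^+ j * s + mu * u.
Arguments Ij {O} P mu j p.

Section IdealLemmas.
Context {O : comNzRingType} {P mu : {poly O}}.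

Lemma Ij_add j p q : Ij P mu j p -> Ij P mu j q -> Ij P mu j (p + q).
Proof.
move=> [s [u ->]] [s' [u' ->]]; exists (s + s'), (u + u').
move: (P ^+ j) => Q; ring.
Qed.

Lemma Ij_opp j p : Ij P mu j p -> Ij P mu j (- p).
Proof. by move=> [s [u ->]]; exists (- s), (- u); move: (P ^+ j) => Q; ring. Qed.

Lemma Ij_mull j p q : Ij P mu j p -> Ij P mu j (q * p).
Proof. by move=> [s [u ->]]; exists (q * s), (q * u); move: (P ^+ j) => Q; ring. Qed.

Lemma Ij_mu j u : Ij P mu j (mu * u).
Proof. by exists 0, u; ring. Qed.

Lemma Ij_P j s : Ij P mu j (P ^+ j * s).
Proof. by exists s, 0; ring. Qed.

Lemma Ij_0 p : Ij P mu 0 p.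
Proof. by exists p, 0; rewrite expr0; ring. Qed.

Lemma Ij_le i j p : (i <= j)%N -> Ij P mu j p -> Ij P mu i p.
Proof.
move=> le [s [u ->]]; exists (P ^+ (j - i) * s), u.
by rewrite -{1}(subnKC le) exprD; move: (P ^+ i) (P ^+ (j - i)) => Q1 Q2; ring.
Qed.

Lemma Ij_mul a b p q : Ij P mu a p -> Ij P mu b q -> Ij P mu (a + b) (p * q).
Proof.
move=> [s [u ->]] [s' [u' ->]]; exists (s * s'), (u * (P ^+ b * s' + mu * u') + P ^+ a * s * u').
by rewrite exprD; move: (P ^+ a) (P ^+ b) => Q1 Q2; ring.
Qed.

End IdealLemmas.

Lemma hornerE_mx (R : comNzRingType) n' (A : 'M[R]_n'.+1) (p : {poly R}) :
  \sum_(i < size p) p`_i *: A ^+ i = horner_mx A p.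
Proof.
have -> : horner_mx A p = horner_mx A (\poly_(i < size p) p`_i) by rewrite coefK.
rewrite poly_def rmorph_sum; apply: eq_bigr => i _.
rewrite /= horner_mxZ rmorphXn; congr (_ *: _ ^+ _); symmetry; exact: horner_mx_X.
Qed.

Lemma centralizer_cyclic (K : fieldType) n' (A : 'M[K]_n'.+1) :
  cyclic_mx A -> forall X, X *m A = A *m X -> exists q, X = horner_mx A q.
Proof.
case=> v Hv X cXA.
have [q Hq] := Hv (X *m v); rewrite hornerE_mx in Hq.
exists q.
suff H : forall w : 'cV_n'.+1, X *m w = horner_mx A q *m w.
  apply/matrixP => i j; have := H (delta_mx j 0).
  by move/(congr1 (fun M : 'cV_n'.+1 => M i 0)); rewrite -!colE !mxE.
move=> w; have [p ->] := Hv w; rewrite hornerE_mx.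
rewrite mulmxA (comm_mx_horner p cXA) -mulmxA Hq mulmxA.
by rewrite [RHS]mulmxA; congr (_ *m _); exact: (comm_horner_mx2 A p q).
Qed.

Lemma cyclic_char_dvd (K : fieldType) n' (A : 'M[K]_n'.+1) :
  cyclic_mx A -> forall p, horner_mx A p = 0 -> char_poly A %| p.
Proof.
move=> cA.
suff E : mxminpoly A = char_poly A by move=> p /mxminpoly_min; rewrite E.
have le : (n'.+1 <= degree_mxminpoly A)%N.
  case: cA => v Hv; set d := degree_mxminpoly A.
  rewrite leqNgt; apply/negP => ltd.
  pose W : 'M[K]_(n'.+1, d) := \matrix_(r, c) (A ^+ c *m v) r 0.
  have HW : forall w : 'cV_n'.+1, exists c : 'cV_d, w = W *m c.
    move=> w; have [p ->] := Hv w; rewrite hornerE_mx.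
    set r := p %% mxminpoly A.
    have -> : horner_mx A p = horner_mx A r.
      by rewrite {1}(divp_eq p (mxminpoly A)) rmorphD rmorphM /= mx_root_minpoly mulr0 add0r.
    have szr : (size r <= d)%N := size_mod_mxminpoly A p.
    exists (\col_(i < d) r`_i).
    rewrite -hornerE_mx mulmx_suml; apply/matrixP => a b; rewrite ord1 {b} summxE !mxE.
    under eq_bigr do rewrite -scalemxAl mxE.
    rewrite (big_ord_widen d (fun i => r`_i * (A ^+ i *m v) a 0)) // big_mkcond.
    apply: eq_bigr => i _; rewrite !mxE mulrC; case: ifP => // /negbT.
    by rewrite -leqNgt => /(nth_default 0) ->; rewrite mulr0.
  have [C HC] := fin_all_exists (fun j : 'I_n'.+1 => HW (delta_mx j 0)).
  pose Cm : 'M[K]_(d, n'.+1) := \matrix_(c, j) (C j) c 0.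
  have HI : (1%:M : 'M[K]_n'.+1) = W *m Cm.
    apply/matrixP => a b; have := congr1 (fun M : 'cV_n'.+1 => M a 0) (HC b).
    rewrite !mxE andbT => ->; apply: eq_bigr => c _; rewrite !mxE.
    done.
  have := mxrankM_maxl W Cm; rewrite -HI mxrank1 => h1.
  have := rank_leq_col W => h2.
  have := leq_trans h1 h2; rewrite leqNgt ltd //.
have dv := mxminpoly_dvd_char A.
have sz : size (mxminpoly A) = size (char_poly A).
  apply/eqP; rewrite eqn_leq dvdp_leq ?monic_neq0 ?char_poly_monic //=.
  by rewrite size_mxminpoly size_char_poly ltnS le.
apply/eqP; rewrite -eqp_monic ?mxminpoly_monic ?char_poly_monic //.
by rewrite -dvdp_size_eqp // sz.
Qed.

Section Lift.
Context (O : comNzRingType) (k : fieldType) (red : {rmorphism O -> k}) (pi : O).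
Hypothesis surj : forall y, exists x, red x = y.
Hypothesis ker : forall x, red x = 0 <-> gen_ideal pi x.

Lemma lift_poly (q : {poly k}) : exists p, map_poly red p = q.
Proof.
elim/poly_ind: q => [|q c [p Hp]]; first by exists 0; rewrite rmorph0.
have [c0 Hc] := surj c; exists (p * 'X + c0%:P).
rewrite rmorphD rmorphM /= map_polyX map_polyC Hp /=; congr (_ + _%:P); exact: Hc.
Qed.

Lemma ker_poly p : map_poly red p = 0 -> exists s, p = pi%:P * s.
Proof.
elim/poly_ind: p => [|p c IH] H; first by exists 0; rewrite mulr0.
have H0 : red c = 0.
  have := congr1 (fun q : {poly k} => q`_0) H.
  by rewrite rmorphD rmorphM /= map_polyX map_polyC coefD coefMX coefC /= add0r coef0.
have H1 : map_poly red p = 0.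
  apply/polyP => i; have := congr1 (fun q : {poly k} => q`_i.+1) H.
  by rewrite rmorphD rmorphM /= map_polyX map_polyC coefD coefMX coefC /= addr0 !coef0.
have [s ->] := IH H1; have [c1 ->] := (ker c).1 H0.
exists (s * 'X + c1%:P); rewrite polyCM; ring.
Qed.

Lemma lift_Ij p (u : {poly k}) mu :
  map_poly red p = map_poly red mu * u -> Ij (pi%:P) mu 1 p.
Proof.
move=> H; have [u0 Hu] := lift_poly u.
have : map_poly red (p - mu * u0) = 0 by rewrite rmorphB rmorphM /= Hu H subrr.
move/ker_poly => [s Hs]; exists s, u0.
by rewrite expr1 -Hs; ring.
Qed.

Lemma red_pi : red pi = 0.
Proof. by apply/ker; exists 1; rewrite mul1r. Qed.

End Lift.



Definition hx (O : nzRingType) m (i0 : 'I_m) (b : 'I_m -> {poly O}) (x : {poly O}) :=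
  fun i => if i == i0 then x else b i.
Arguments hx {O m} i0 b x _.
Definition Gf (O : comNzRingType) m (F : {mpoly O[m]}) i0 b x :=
  mmap polyC (hx i0 b x) F - 'X.
Arguments Gf {O m} F i0 b x.
Definition Df (O : comNzRingType) m (F : {mpoly O[m]}) i0 b x :=
  mmap polyC (hx i0 b x) (mderiv i0 F).
Arguments Df {O m} F i0 b x.

Section Newton.
Context (O : comNzRingType) (pi : O) (n' m : nat) (mu : {poly O})
  (F : {mpoly O[m]}) (i0 : 'I_m) (b : 'I_m -> {poly O}) (e x1 : {poly O}).
Hypothesis mu_monic : mu \is monic.
Hypothesis size_mu : size mu = n'.+2.
Hypothesis compl : complete_wrt pi.
Hypothesis Hx1 : (size x1 <= n'.+1)%N.
Local Notation P := (pi%:P).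
Local Notation G := (Gf F i0 b).
Local Notation D := (Df F i0 b).
Hypothesis HG1 : Ij P mu 1 (G x1).
Hypothesis HD1 : Ij P mu 1 (1 - D x1 * e).

Lemma taylor_G x y : exists q, G (x + y) = G x + y * D x + y ^+ 2 * q.
Proof.
have [q Hq] := @taylor m O _ polyC (hx i0 b x) (hx i0 b (x + y)) i0 y
  ltac:(by rewrite /hx eqxx) ltac:(by move=> i /negbTE; rewrite /hx => ->) F.
exists q; rewrite /Gf Hq /Df.
move: (mmap _ _ F) (mmap _ _ (mderiv _ F)) => X Y; ring.
Qed.

Lemma taylor_G1 x y : exists q, G (x + y) = G x + y * q.
Proof.
have [q ->] := taylor_G x y; exists (D x + y * q); ring.
Qed.

Lemma taylor_D1 x y : exists q, D (x + y) = D x + y * q.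
Proof.
have [q Hq] := @taylor m O _ polyC (hx i0 b x) (hx i0 b (x + y)) i0 y
  ltac:(by rewrite /hx eqxx) ltac:(by move=> i /negbTE; rewrite /hx => ->) (mderiv i0 F).
exists (mmap polyC (hx i0 b x) (mderiv i0 (mderiv i0 F)) + y * q); rewrite /Df Hq.
move: (mmap _ _ (mderiv _ F)) (mmap _ _ (mderiv _ (mderiv _ F))) => X Y; ring.
Qed.

Lemma size_mulPX j (z : {poly O}) : (size (P ^+ j * z)%R <= size z)%N.
Proof. by rewrite -polyC_exp mul_polyC size_scale_leq. Qed.

Lemma step j x : (0 < j)%N -> Ij P mu 1 (1 - D x * e) -> Ij P mu j (G x) ->
  exists z : {poly O}, (size z <= n'.+1)%N /\ Ij P mu j.+1 (G (x + P ^+ j * z)).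
Proof.
move=> j0 HD [s [u Hg]].
pose z0 := - (s * e).
pose z := Pdiv.Ring.rmodp z0 mu; pose dq := Pdiv.Ring.rdivp z0 mu.
have Ez : z0 = dq * mu + z := Pdiv.RingMonic.rdivp_eq mu_monic z0.
exists z; split.
  have := Pdiv.Ring.ltn_rmodpN0 z0 (monic_neq0 mu_monic).
  by rewrite size_mu ltnS.
have [q Hq] := taylor_G x (P ^+ j * z).
have E : G (x + P ^+ j * z) = P ^+ j * (s * (1 - D x * e)) + mu * (u - P ^+ j * dq * D x)
   + P ^+ j * P ^+ j * (z ^+ 2 * q).
  have Ez' : z = z0 - dq * mu by rewrite Ez; ring.
  rewrite Hq Hg Ez' /z0; move: (P ^+ j) (D x) => Q Dx; ring.
rewrite E -addn1; apply: Ij_add; first apply: Ij_add.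
- by apply: Ij_mul; [rewrite -(mulr1 (P ^+ j)); apply: Ij_P | apply: Ij_mull].
- exact: Ij_mu.
- apply: (@Ij_le _ _ _ _ (j + j)); first by rewrite leq_add2l.
  rewrite mulrC; apply: Ij_mull; apply: Ij_mul; rewrite -(mulr1 (P ^+ j)); exact: Ij_P.
Qed.

Definition Inv j (x : {poly O}) := (size x <= n'.+1)%N /\ (exists z, x = x1 + P * z)%R /\ Ij P mu j.+1 (G x).

Lemma inv_step j x : Inv j x ->
  exists z : {poly O}, (size z <= n'.+1)%N /\ Inv j.+1 (x + P ^+ j.+1 * z).
Proof.
move=> [sx [[z1 Ex] HG]].
have HD : Ij P mu 1 (1 - D x * e).
  have [q Hq] := taylor_D1 x1 (P * z1).
  have -> : 1 - D x * e = (1 - D x1 * e) + P ^+ 1 * (- (z1 * q * e)).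
    by rewrite Ex Hq expr1; ring.
  apply: Ij_add => //; exact: Ij_P.
have [z [sz Hz]] := @step j.+1 x (ltn0Sn j) HD HG.
exists z; split => //; split; [|split] => //.
- rewrite (leq_trans (size_add _ _)) // geq_max sx /=.
  exact: leq_trans (size_mulPX _ _) sz.
- exists (z1 + P ^+ j * z); rewrite Ex exprS; move: (P ^+ j) => Q; ring.
Qed.

Lemma newton : exists x : {poly O}, (exists z, x = x1 + P * z) /\ exists w, G x = mu * w.
Proof.
have Inv0 : Inv 0 x1.
  by split => //; split => //; exists 0; rewrite mulr0 addr0.
have stepS : forall j (x : {x | Inv j x}),
    {z : {poly O} | (size z <= n'.+1)%N /\ Inv j.+1 (sval x + P ^+ j.+1 * z)}.
  move=> j x; apply: constructive_indefinite_description; exact: inv_step (svalP x).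
pose xs := fix xs j : {x | Inv j x} := match j with
  | 0 => exist _ x1 Inv0
  | j'.+1 => exist _ (sval (xs j') + P ^+ j'.+1 * sval (stepS j' (xs j')))
              (proj2 (svalP (stepS j' (xs j'))))
  end.
pose xv j := sval (xs j).
have xvS : forall j, xv j.+1 = xv j + P ^+ j.+1 * sval (stepS j (xs j)) by [].
have xvI : forall j, Inv j (xv j) := fun j => svalP (xs j).
have lim : forall i : 'I_n'.+1, exists c, forall j, gen_ideal (pi ^+ j) (c - (xv j)`_i).
  move=> i; apply: compl.2 => j; rewrite xvS.
  set zz := sval (stepS j (xs j)); clearbody zz.
  rewrite coefD addrAC subrr add0r -polyC_exp coefCM.
  by exists (pi * zz`_i); rewrite exprS; move: (pi ^+ j) => Q; ring.
have [c Hc] := fin_all_exists lim.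
pose x := \poly_(i < n'.+1) c (inord i).
have Hxj : forall j, exists w, x = xv j + P ^+ j * w.
  move=> j; have [d Hd] := fin_all_exists (fun i => Hc i j).
  exists (\poly_(i < n'.+1) d (inord i)).
  apply/polyP => i; rewrite coefD -polyC_exp coefCM !coef_poly.
  case: ltnP => hi.
    have := Hd (inord i); rewrite inordK // => H.
    by rewrite -[c _](subrK ((xv j)`_i)) H; move: (pi ^+ j) => Q; ring.
  rewrite mulr0 addr0 nth_default //; exact: leq_trans (xvI j).1 hi.
have HGx : forall j, Ij P mu j (G x).
  move=> j; have [w ->] := Hxj j; have [q ->] := taylor_G1 (xv j) (P ^+ j * w).
  apply: Ij_add; first exact: Ij_le (leqnSn j) (xvI j).2.2.
  rewrite -mulrA; exact: Ij_P.
exists x; split.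
  have [w Ew] := Hxj 1; have [_ [[z1 E1] _]] := xvI 1.
  by exists (z1 + w); rewrite Ew E1 expr1; ring.
set g := G x.
pose r := Pdiv.Ring.rmodp g mu.
have Eg : g = Pdiv.Ring.rdivp g mu * mu + r := Pdiv.RingMonic.rdivp_eq mu_monic g.
suff r0 : r = 0.
  by exists (Pdiv.Ring.rdivp g mu); rewrite {1}Eg r0 addr0 mulrC.
apply/polyP => i; rewrite coef0.
apply: compl.1 => j; rewrite subr0.
have [s [u Hsu]] := HGx j.
have -> : r = (pi ^+ j) *: Pdiv.Ring.rmodp s mu.
  rewrite /r /g Hsu (Pdiv.RingMonic.rmodpD mu_monic) [mu * u]mulrC (Pdiv.RingMonic.rmodp_mull mu_monic).
  by rewrite addr0 -polyC_exp mul_polyC (Pdiv.RingMonic.rmodpZ mu_monic).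
by rewrite coefZ; exists ((Pdiv.Ring.rmodp s mu)`_i); rewrite mulrC.
Qed.

End Newton.



Lemma comm_mx_eval (R : comNzRingType) n' m (G : {mpoly R[m]})
  (B : 'I_m -> 'M[R]_n'.+1) (X : 'M[R]_n'.+1) :
  (forall j, X *m B j = B j *m X) -> X *m mx_eval G B = mx_eval G B *m X.
Proof.
move=> HB; rewrite /mx_eval; apply: comm_mx_sum => mo _.
rewrite /comm_mx -scalemxAr -scalemxAl; congr (_ *: _).
apply: (big_ind (comm_mx X)) => //; first exact: comm_mx1.
  by move=> M1 M2; apply: comm_mxM.
move=> i _; elim: (mo i) => [|k IH]; first exact: comm_mx1.
by rewrite exprS; apply: comm_mxM.
Qed.

Lemma mx_eval_ext (R : comNzRingType) n m (G : {mpoly R[m]}) (B B' : 'I_m -> 'M[R]_n) :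
  (forall i, B i = B' i) -> mx_eval G B = mx_eval G B'.
Proof.
move=> H; rewrite /mx_eval; apply: eq_bigr => mo _; congr (_ *: _).
by apply: eq_bigr => i _; rewrite H.
Qed.

Lemma red_eval (O : comNzRingType) (k : fieldType) (red : {rmorphism O -> k}) n' m
  (A : 'M[O]_n'.+1) (h : 'I_m -> {poly O}) (Fm : {mpoly O[m]}) :
  map_mx red (horner_mx A (mmap polyC h Fm)) =
  mx_eval (map_mpoly red Fm) (fun i => map_mx red (horner_mx A (h i))).
Proof.
rewrite map_horner_mx mmap_comp_rmorph.
have -> : mmap (map_poly red \o polyC) (map_poly red \o h) Fm =
          mmap polyC (map_poly red \o h) (map_mpoly red Fm).
  rewrite mmap_map /mmap; apply: eq_bigr => mo _ /=; by rewrite map_polyC.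
rewrite -mx_eval_horner; apply: mx_eval_ext => i /=.
by rewrite map_horner_mx.
Qed.

Theorem theorem2p5 (O : comUnitRingType) (pi : O) (k : fieldType)
  (red : {rmorphism O -> k}) (n m r d : nat)
  (A : 'M[O]_n) (F : {mpoly O[m]}) (Bt : 'I_m -> 'M[k]_n) :
  local_ring_with_max (gen_ideal pi) ->
  principal_ideal_ring O ->
  complete_wrt pi ->
  (forall y : k, exists x : O, red x = y) ->
  (forall x : O, red x = 0 <-> gen_ideal pi x) ->
  ~~ (2%N \in [pchar k]) ->
  cyclic_mx (map_mx red A) ->
  mleadc F = 1 -> msize F = d.+1 ->
  (forall i j, Bt i *m Bt j = Bt j *m Bt i) ->
  mx_eval (map_mpoly red F) Bt = map_mx red A ->
  (1 <= r <= m)%N ->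
  (forall i : 'I_m, (i < r)%N -> mx_eval (mderiv i (map_mpoly red F)) Bt \in unitmx) ->
  (forall i : 'I_m, (r <= i)%N -> mx_eval (mderiv i (map_mpoly red F)) Bt = 0) ->
  exists B : 'I_m -> 'M[O]_n,
    (forall i j, B i *m B j = B j *m B i) /\
    (forall i, map_mx red (B i) = Bt i) /\
    mx_eval F B = A.
Proof.
move=> _ _ Hcompl Hsurj Hker _ Hcyc _ _ Hcomm Heval Hr Hunit _.
case: n A Bt Hcyc Hcomm Heval Hunit => [|n'] A Bt Hcyc Hcomm Heval Hunit.
  exists (fun _ => 0); split; [|split].
  - by move=> i j; rewrite [LHS]flatmx0 [RHS]flatmx0.
  - by move=> i; rewrite [LHS]flatmx0 [RHS]flatmx0.
  - by rewrite [LHS]flatmx0 [RHS]flatmx0.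
have r0 : (0 < r)%N by case/andP: Hr.
have m0 : (0 < m)%N by case/andP: Hr => h1 h2; exact: leq_trans h1 h2.
pose i0 : 'I_m := Ordinal m0.
set Ab := map_mx red A.
set Fb := map_mpoly red F.
have cB : forall i, Bt i *m Ab = Ab *m Bt i.
  by move=> i; rewrite /Ab -Heval; apply: (@comm_mx_eval _ _ _ _ _ _) => j; apply: Hcomm.
have [pb Hpb] : exists pb : 'I_m -> {poly k}, forall i, Bt i = horner_mx Ab (pb i).
  exact: (fin_all_exists (fun i => @centralizer_cyclic _ _ _ Hcyc _ (cB i))).
have [p Hp] : exists p : 'I_m -> {poly O}, forall i, map_poly red (p i) = pb i.
  exact: (fin_all_exists (fun i => @lift_poly _ _ _ Hsurj (pb i))).
set mu := char_poly A.
have mu_monic : mu \is monic := char_poly_monic A.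
have size_mu : size mu = n'.+2 := size_char_poly A.
pose x1 := Pdiv.Ring.rmodp (p i0) mu.
have Hx1 : (size x1 <= n'.+1)%N.
  by have := Pdiv.Ring.ltn_rmodpN0 (p i0) (monic_neq0 mu_monic); rewrite size_mu ltnS.
have Hpx1 : horner_mx A (p i0) = horner_mx A x1.
  rewrite {1}(Pdiv.RingMonic.rdivp_eq mu_monic (p i0)) rmorphD rmorphM /=.
  by rewrite Cayley_Hamilton mulr0 add0r.
have redp : forall i, map_mx red (horner_mx A (p i)) = Bt i.
  by move=> i; rewrite map_horner_mx Hp Hpb.
have redh : forall i, map_mx red (horner_mx A (hx i0 p x1 i)) = Bt i.
  move=> i; rewrite /hx; case: eqP => [->|_]; last exact: redp.
  by rewrite -Hpx1 redp.
pose M := mx_eval (mderiv i0 Fb) Bt.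
have Mu : M \in unitmx by apply: Hunit.
have cM : Ab *m M = M *m Ab.
  by apply: (@comm_mx_eval _ _ _ _ _ _) => j; rewrite cB.
have cMi : invmx M *m Ab = Ab *m invmx M.
  have E : invmx M *m (Ab *m M) *m invmx M = invmx M *m (M *m Ab) *m invmx M by rewrite cM.
  move: E; rewrite !mulmxA (mulVmx Mu) mul1mx -!mulmxA (mulmxV Mu) mulmx1 => ->.
  done.
have [eb Heb] := @centralizer_cyclic _ _ _ Hcyc _ cMi.
have [e He] := @lift_poly _ _ _ Hsurj eb.
have Zl : forall q, map_mx red (horner_mx A q) = 0 -> Ij (pi%:P) mu 1 q.
  move=> q H.
  have H' : horner_mx Ab (map_poly red q) = 0 by rewrite -map_horner_mx.
  have dv := @cyclic_char_dvd _ _ _ Hcyc _ H'.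
  rewrite /Ab -map_char_poly -/mu in dv.
  apply: (@lift_Ij _ _ red pi Hsurj Hker _ (map_poly red q %/ map_poly red mu) mu).
  by rewrite mulrC divpK.
have HG1 : Ij (pi%:P) mu 1 (Gf F i0 p x1).
  apply: Zl; rewrite /Gf rmorphB /= horner_mx_X map_mxB red_eval.
  rewrite (@mx_eval_ext _ _ _ _ _ _ redh) -/Fb Heval subrr //.
have HD1 : Ij (pi%:P) mu 1 (1 - Df F i0 p x1 * e).
  apply: Zl; rewrite /Df rmorphB rmorphM rmorph1 /= map_mxB map_mxM map_mx1 red_eval.
  rewrite (@mx_eval_ext _ _ _ _ _ _ redh) map_horner_mx He -Heb mderiv_map -/Fb -/M.
  by rewrite (mulmxV Mu) subrr.
have [x [[z Ez] [w Ew]]] := @newton _ _ _ _ _ _ _ _ _ _ mu_monic size_mu Hcompl Hx1 HG1 HD1.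
exists (fun i => horner_mx A (hx i0 p x i)); split; [|split].
- by move=> i j; exact: (comm_horner_mx2 A _ _).
- move=> i; rewrite /hx; case: eqP => [->|_]; last exact: redp.
  rewrite Ez rmorphD rmorphM /= horner_mx_C map_mxD map_mxM map_scalar_mx.
  rewrite (@red_pi _ _ _ _ Hker) raddf0 mul0mx addr0 -Hpx1 redp //.
- rewrite mx_eval_horner.
  have -> : mmap polyC (hx i0 p x) F = Gf F i0 p x + 'X by rewrite /Gf subrK.
  by rewrite Ew rmorphD rmorphM /= Cayley_Hamilton mul0r add0r horner_mx_X.
Qed.
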